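(* Assume $\omega$ satisfies $\omega(x)/\mathrm{tr}\,\omega(x)\ge2\kappa I$ for all $x\in\mathbb Z^d$, with $\kappa\in(0,\frac1{2d}]$. Let $\theta=\frac1{4\kappa}$ (so $\theta\ge d/2$) and $\eta(y)=(1+|y|^2)^{-\theta}$ for $y\in\mathbb R^d$. There exists a constant $C_0=C_0(d,\kappa)>0$ such that for all $x\in\mathbb Z^d$, $$L_\omega\eta(x)\ge-\mathbb 1_{x\in B_{C_0\theta^2}}.$$
   Context: $\omega:\mathbb Z^d\to\{$positive-definite diagonal matrices$\}$, $\omega(x)=\mathrm{diag}[\omega_1(x),\dots,\omega_d(x)]$. $L_\omega u(x)=\sum_{i=1}^d\frac{\omega_i(x)}{2\mathrm{tr}\,\omega(x)}[u(x+e_i)+u(x-e_i)-2u(x)]$. $B_r=\{x\in\mathbb Z^d:|x|<r\}$. *)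

(* Defs.v *)
From mathcomp Require Import all_boot all_order all_algebra.
From mathcomp Require Import all_classical all_reals all_analysis.
Set Implicit Arguments. Unset Strict Implicit. Unset Printing Implicit Defensive.
Import Order.TTheory GRing.Theory Num.Theory.
Local Open Scope ring_scope.

Definition lat_norm (R : realType) (d : nat) (x : 'I_d -> int) : R :=
  Num.sqrt (\sum_(i < d) ((x i)%:~R : R) ^+ 2).

Definition lat_to_real (R : realType) (d : nat) (x : 'I_d -> int) : 'I_d -> R :=
  fun j => (x j)%:~R.

Definition lat_shift (d : nat) (x : 'I_d -> int) (i : 'I_d) (s : int) : 'I_d -> int :=
  fun j => x j + s * (i == j)%:R.

Definition eta_fun (R : realType) (d : nat) (theta : R) (y : 'I_d -> R) : R :=
  (1 + \sum_(i < d) y i ^+ 2) `^ (- theta).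

(* L_omega u(x) = sum_i omega_i(x)/(2 tr omega(x)) [u(x+e_i)+u(x-e_i)-2u(x)],
   where omega : Z^d -> (diagonal entries) 'I_d -> R. *)
Definition L_omega (R : realType) (d : nat) (omega : ('I_d -> int) -> 'I_d -> R)
  (u : ('I_d -> R) -> R) (x : 'I_d -> int) : R :=
  \sum_(i < d) omega x i / (2 * \sum_(j < d) omega x j) *
    (u (lat_to_real R (lat_shift x i 1)) + u (lat_to_real R (lat_shift x i (-1)))
     - 2 * u (lat_to_real R x)).

(* Main.v *)
Require Import Defs.
From mathcomp Require Import all_boot all_order all_algebra.
From mathcomp Require Import all_classical all_reals all_analysis.
From mathcomp Require Import ring lra.
Import Order.TTheory GRing.Theory Num.Theory.
Local Open Scope ring_scope.
Section H.
Variable R : realType.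
Lemma expR_ge3 (z : R) : 0 <= z -> 1 + z + z^+2/2 + z^+3/6 <= expR z.
Proof.
move=> z0.
have H := @nondecreasing_cvgn_le R (series (exp_coeff z)).
have -> : 1 + z + z^+2/2 + z^+3/6 = series (exp_coeff z) 4.
  rewrite /series /= big_nat_recr //= big_nat_recr //= big_nat_recr //= big_nat_recr //= big_geq //.
  by rewrite /exp_coeff /= !factS /= fact0 expr0 expr1; field.
rewrite /expR; apply: H; last exact: is_cvg_series_exp_coeff.
apply/nondecreasing_seqP => n; rewrite /series /= big_nat_recr //= lerDl.
by rewrite /exp_coeff /= divr_ge0 // exprn_ge0.
Qed.

Lemma cosh_ge (z : R) : 2 + z^+2 <= expR z + expR (- z).
Proof.
wlog z0 : z / 0 <= z.
  move=> H; case: (lerP 0 z) => [/H//|zn].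
  have := H (- z); rewrite sqrrN opprK [expR (- z) + _]addrC; apply; lra.
have := @expR_ge3 z z0; set A := (X in X <= _) => HA.
have h2 := exprn_ge0 2 z0; have h3 := exprn_ge0 3 z0.
have A1 : 1 <= A by rewrite /A; lra.
rewrite expRN.
have e0 : 0 < expR z := expR_gt0 z.
have step : A + A^-1 <= expR z + (expR z)^-1.
  rewrite -subr_ge0.
  have -> : expR z + (expR z)^-1 - (A + A^-1) = (expR z - A) * (1 - (A * expR z)^-1).
    field; apply/andP; split; lra.
  apply: mulr_ge0; first lra.
  rewrite subr_ge0 invf_le1; last by apply: mulr_gt0; lra.
  by rewrite -[1]mulr1; apply: ler_pM; lra.
apply: le_trans step.
have Ah : A + A^-1 - (2 + z^+2) = (z^+4/12 + z^+6/36) / A.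
  rewrite /A; field; lra.
rewrite -subr_ge0 Ah divr_ge0 //; last lra.
by apply: addr_ge0; apply: divr_ge0 => //; apply: exprn_ge0.
Qed.

Lemma ln_le_sub1 (x : R) : 0 < x -> ln x <= x - 1.
Proof. move=> x0; have := @le_ln1Dx R (x - 1); have -> : 1 + (x - 1) = x by ring.
by apply; lra. Qed.

Lemma ln_diff_ge (u v : R) : 0 < u -> 0 < v -> (u - v) / u <= ln u - ln v.
Proof.
move=> u0 v0; have := @ln_le_sub1 (v / u) (divr_gt0 v0 u0).
rewrite ln_div ?posrE // => h.
have -> : (u - v) / u = 1 - v / u by field; lra.
lra.
Qed.

Lemma powR_exp (u p : R) : 0 < u -> u `^ p = expR (p * ln u).
Proof. by move=> u0; rewrite /powR gt_eqF. Qed.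

Lemma dir_bound (T s a r : R) : 0 < T -> 0 < s -> 0 < s + 1 + 2 * a -> 0 < s + 1 - 2 * a ->
  0 <= r -> `|a| <= r ->
  0 <= 1 - T * (2 * s + 1) / (2 * s ^+ 2) ->
  s `^ (- T) * (- T * (2 * s + 1 - 4 * a ^+ 2) / s ^+ 2 +
     (1 - T * (2 * s + 1) / (2 * s ^+ 2)) * (4 * T ^+ 2 * a ^+ 2 / (s + 1 + 2 * r) ^+ 2))
  <= (s + 1 + 2 * a) `^ (- T) + (s + 1 - 2 * a) `^ (- T) - 2 * s `^ (- T).
Proof.
move=> T0 s0 u10 u20 r0 ar E0.
set u1 := s + 1 + 2 * a; set u2 := s + 1 - 2 * a.
rewrite !powR_exp //.
set l1 := ln u1; set l2 := ln u2; set ls := ln s.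
set M := - T * (l1 + l2) / 2; set z := T * (l1 - l2) / 2.
have -> : - T * l1 = M + (- z) by rewrite /M /z; field.
have -> : - T * l2 = M + z by rewrite /M /z; field.
rewrite !expRD.
have hc := cosh_ge z.
set E := 1 - T / 2 * (u1 * u2 / s ^+ 2 - 1).
have hM : expR (- T * ls) * E <= expR M.
  have -> : M = - T * ls + (- T / 2 * (l1 + l2 - 2 * ls)) by rewrite /M; field.
  rewrite expRD ler_pM2l ?expR_gt0 //.
  apply: le_trans (expR_ge1Dx _).
  have hl : l1 + l2 - 2 * ls <= u1 * u2 / s ^+ 2 - 1.
    have -> : l1 + l2 - 2 * ls = ln (u1 * u2 / s ^+ 2).
      rewrite ln_div ?posrE ?mulr_gt0 ?exprn_gt0 // lnM ?posrE // lnXn //.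
      by rewrite /l1 /l2 /ls mulr2n; ring.
    by apply: ln_le_sub1; apply: divr_gt0; [apply: mulr_gt0 | apply: exprn_gt0].
  rewrite /E; have := T0; nra.
have hz : 4 * T ^+ 2 * a ^+ 2 / (s + 1 + 2 * r) ^+ 2 <= z ^+ 2.
  have D0 : 0 < s + 1 + 2 * r by lra.
  have key : 4 * `|a| / (s + 1 + 2 * r) <= `|l1 - l2|.
    case: (lerP 0 a) => a0.
      have h := @ln_diff_ge u1 u2 u10 u20.
      rewrite ger0_norm //.
      have e : u1 - u2 = 4 * a by rewrite /u1 /u2; ring.
      rewrite e in h.
      apply: le_trans (ler_norm _); apply: le_trans h.
      apply: ler_wpM2l; first lra.
      rewrite lef_pV2 ?posrE //; rewrite /u1; have := ger0_norm a0; lra.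
    have h := @ln_diff_ge u2 u1 u20 u10.
    rewrite ltr0_norm // distrC.
    have e : u2 - u1 = 4 * (- a) by rewrite /u1 /u2; ring.
    rewrite e in h.
    apply: le_trans (ler_norm _); apply: le_trans h.
    rewrite mulrN. apply: ler_wpM2l; first lra.
    rewrite lef_pV2 ?posrE //; rewrite /u2; have := ltr0_norm a0; lra.
  have k2 : (4 * `|a| / (s + 1 + 2 * r)) ^+ 2 <= `|l1 - l2| ^+ 2.
    by apply: lerXn2r => //; rewrite ?nnegrE ?divr_ge0 //; lra.
  move: k2; rewrite real_normK ?num_real // expr_div_n exprMn real_normK ?num_real // => k2.
  have -> : z ^+ 2 = T ^+ 2 / 4 * (l1 - l2) ^+ 2 by rewrite /z; field.
  have -> : 4 * T ^+ 2 * a ^+ 2 / (s + 1 + 2 * r) ^+ 2 = T ^+ 2 / 4 * (4 ^+ 2 * a ^+ 2 / (s + 1 + 2 * r) ^+ 2).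
    by field; rewrite gt_eqF.
  apply: ler_wpM2l k2; apply: divr_ge0 => //; exact: sqr_ge0.
have hEdef : E = 1 - T * (2 * s + 1 - 4 * a ^+ 2) / (2 * s ^+ 2).
  by rewrite /E /u1 /u2; field; rewrite gt_eqF.
have hE : 1 - T * (2 * s + 1) / (2 * s ^+ 2) <= E.
  rewrite hEdef lerD2l lerN2 ler_wpM2r //; first by rewrite invr_ge0; have := sqr_ge0 s; lra.
  rewrite ler_wpM2l; [|lra|]; have := sqr_ge0 a; lra.
set P := expR (- T * ls).
have P0 : 0 < P := expR_gt0 _.
set Emin := 1 - T * (2 * s + 1) / (2 * s ^+ 2).
set B := 4 * T ^+ 2 * a ^+ 2 / (s + 1 + 2 * r) ^+ 2.
have B0 : 0 <= B.
  rewrite /B; apply: divr_ge0; last exact: sqr_ge0.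
  by apply: mulr_ge0; [apply: mulr_ge0; [lra | exact: sqr_ge0] | exact: sqr_ge0].
have h1 : expR M * (2 + z ^+ 2) <= expR M * expR (- z) + expR M * expR z.
  rewrite -mulrDr ler_wpM2l ?expR_ge0 //; lra.
have z2 := sqr_ge0 z.
have h2 : P * E * (2 + z ^+ 2) <= expR M * (2 + z ^+ 2).
  rewrite ler_wpM2r //; lra.
have h3 : Emin * B <= E * z ^+ 2 by apply: ler_pM.
have h4 : P * (Emin * B) <= P * (E * z ^+ 2) by rewrite ler_wpM2l // ltW.
have h5 : - T * (2 * s + 1 - 4 * a ^+ 2) / s ^+ 2 = 2 * E - 2.
  by rewrite hEdef; field; rewrite gt_eqF.
rewrite h5.
have -> : P * (2 * E - 2 + Emin * B) = P * E * 2 - 2 * P + P * (Emin * B) by ring.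
have e2 : P * E * (2 + z ^+ 2) = P * E * 2 + P * (E * z ^+ 2) by ring.
rewrite e2 in h2.
lra.
Qed.

Lemma fp_key (r : R) : 50 <= r ->
  - 9 * r * (1 + r^+2) ^+ 2 <= 2 * r^+2 * (1 + r^+2) ^+ 2 - (2 * (1 + r^+2) + 1) * (1 + r^+2 + 1 + 2 * r) ^+ 2.
Proof.
move=> r50.
set s := 1 + r^+2.
have s1 : 2500 <= r ^+ 2.
  have -> : (2500:R) = 50 ^+ 2 by rewrite expr2; lra.
  apply: lerXn2r; rewrite ?nnegrE //; lra.
have e : 2 * r^+2 * s ^+ 2 - (2 * s + 1) * (s + 1 + 2 * r) ^+ 2 =
   - 7 * s^+2 - 8 * r * s^+2 - (2 * s * (1 + 2 * r) ^+ 2 + 2 * s * (1 + 2 * r) + (1 + 2 * r) ^+ 2).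
  by rewrite /s; ring.
rewrite e.
have h1 : (1 + 2 * r) ^+ 2 <= 5 * s.
  have := sqr_ge0 (r - 2); rewrite /s !expr2; lra.
have h2 : 1 + 2 * r <= s.
  have r0 : 0 <= r by lra.
  have r2 : 2 <= r by lra.
  have := ler_wpM2l r0 r2; rewrite /s !expr2; lra.
have s0 : 0 <= s by rewrite /s; lra.
have h3 : 2 * s * (1 + 2 * r) ^+ 2 <= 10 * s ^+ 2.
  have s2 : 0 <= 2 * s by lra.
  have hh := ler_wpM2l s2 h1.
  by have -> : 10 * s ^+ 2 = 2 * s * (5 * s) by ring.
have h4 : 2 * s * (1 + 2 * r) <= 2 * s ^+ 2.
  have s2 : 0 <= 2 * s by lra.
  have hh := ler_wpM2l s2 h2.
  by have -> : 2 * s ^+ 2 = 2 * s * s by ring.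
have h5 : 5 * s <= s ^+ 2.
  have s5 : 5 <= s by rewrite /s; lra.
  have hh := ler_wpM2r s0 s5.
  by rewrite expr2.
have h6 : 20 * s ^+ 2 <= r * s ^+ 2.
  apply: ler_wpM2r; [exact: sqr_ge0 | lra].
clear e; lra.
Qed.

Lemma fp_T2 (T r s : R) : 0 <= T -> 100 * T <= r -> r ^+ 2 <= s -> 1 <= s ->
  T ^+ 2 * r ^+ 2 * (2 * s + 1) <= r ^+ 2 * s ^+ 2 / 100.
Proof.
move=> T0 Tr rs s1.
have t2 : T ^+ 2 <= r ^+ 2 / 10000.
  have -> : r ^+ 2 / 10000 = (r / 100) ^+ 2 by rewrite !expr2; field.
  apply: lerXn2r; rewrite ?nnegrE //; lra.
have r20 := sqr_ge0 r.
have p1 : 0 <= r ^+ 2 * (2 * s + 1) by apply: mulr_ge0 => //; lra.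
have q1 := ler_wpM2r p1 t2.
have q2 : r ^+ 2 * (2 * s + 1) <= s * (3 * s).
  have h2s : 0 <= 2 * s + 1 by lra.
  have h3s : 2 * s + 1 <= 3 * s by lra.
  exact: ler_pM r20 h2s rs h3s.
have q3 : r ^+ 2 / 10000 * (r ^+ 2 * (2 * s + 1)) <= r ^+ 2 / 10000 * (s * (3 * s)).
  have c0 : 0 <= r ^+ 2 / 10000 by apply: divr_ge0 r20 _; lra.
  exact: (ler_wpM2l c0 q2).
have e3 : r ^+ 2 / 10000 * (s * (3 * s)) = 3 / 10000 * (r ^+ 2 * s ^+ 2) by ring.
have p2 : 0 <= r ^+ 2 * s ^+ 2 by apply: mulr_ge0 => //; exact: sqr_ge0.
rewrite mulrA in q1; apply: le_trans q1 _; apply: le_trans q3 _; rewrite e3.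
by clear -p2; lra.
Qed.

Lemma final_poly (T r : R) : 1/2 <= T -> 100 * T <= r ->
  0 <= 2 * r^+2 * (1 + r^+2 + 1 + 2 * r) ^+ 2
       + T * r^+2 * (2 * (1 + r^+2) ^+ 2 - T * (2 * (1 + r^+2) + 1))
       - T * (2 * (1 + r^+2) + 1) * (1 + r^+2 + 1 + 2 * r) ^+ 2.
Proof.
move=> T1 Tr.
have r50 : 50 <= r by lra.
have key := @fp_key r r50.
set s := 1 + r^+2 in key *.
set D := s + 1 + 2 * r in key *.
have T0 : 0 <= T by lra.
have sr : r ^+ 2 <= s by rewrite /s; lra.
have s1 : 1 <= s by rewrite /s; have := sqr_ge0 r; lra.
have hT2 := @fp_T2 T r s T0 Tr sr s1.
have e : 2 * r^+2 * D ^+ 2 + T * r^+2 * (2 * s ^+ 2 - T * (2 * s + 1)) - T * (2 * s + 1) * D ^+ 2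
   = 2 * r^+2 * D ^+ 2 + T * (2 * r^+2 * s ^+ 2 - (2 * s + 1) * D ^+ 2) - T ^+ 2 * r ^+ 2 * (2 * s + 1).
  by ring.
rewrite e.
have sD : s <= D by rewrite /D; lra.
have s0 : 0 <= s by lra.
have hD : r ^+ 2 * s ^+ 2 <= r ^+ 2 * D ^+ 2.
  by apply: ler_wpM2l; [exact: sqr_ge0 | apply: lerXn2r; rewrite ?nnegrE //; lra].
have hk : T * (- 9 * r * s ^+ 2) <= T * (2 * r^+2 * s ^+ 2 - (2 * s + 1) * D ^+ 2).
  by apply: ler_wpM2l.
have hT : 9 * r * s ^+ 2 * T <= 9 * r ^+ 2 * s ^+ 2 / 100.
  have p : 0 <= 9 * r * s ^+ 2 by apply: mulr_ge0; [lra | exact: sqr_ge0].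
  have Tr' : T <= r / 100 by lra.
  have := ler_wpM2l p Tr'.
  have -> : 9 * r * s ^+ 2 * (r / 100) = 9 * r ^+ 2 * s ^+ 2 / 100 by ring.
  done.
have p2 : 0 <= r ^+ 2 * s ^+ 2 by apply: mulr_ge0; exact: sqr_ge0.
move: hD hk hT hT2 p2.
generalize (T * (2 * r ^+ 2 * s ^+ 2 - (2 * s + 1) * D ^+ 2)) => X.
clear; move=> *; lra.
Qed.
End H.

Lemma sum_shift (R : realType) (d : nat) (x : 'I_d -> int) (i : 'I_d) (c : int) :
  \sum_(j < d) (lat_to_real R (lat_shift x i c) j) ^+ 2 =
  \sum_(j < d) (lat_to_real R x j) ^+ 2 + 2 * c%:~R * (x i)%:~R + c%:~R ^+ 2.
Proof.
rewrite (bigD1 i) //= [in RHS](bigD1 i) //=.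
have -> : \sum_(j < d | j != i) lat_to_real R (lat_shift x i c) j ^+ 2 =
          \sum_(j < d | j != i) lat_to_real R x j ^+ 2.
  apply: eq_bigr => j ji; rewrite /lat_to_real /lat_shift eq_sym (negbTE ji) mulr0 addr0 //.
rewrite /lat_to_real /lat_shift eqxx mulr1 intrD; ring.
Qed.

Theorem lemma2p5 (R : realType) (d : nat) (kappa : R) :
  (0 < d)%N -> 0 < kappa -> kappa <= (2 * d%:R)^-1 ->
  exists C0 : R, 0 < C0 /\
    forall omega : ('I_d -> int) -> 'I_d -> R,
      (forall x i, 0 < omega x i) ->
      (forall x i, omega x i / (\sum_(j < d) omega x j) >= 2 * kappa) ->
      forall x : 'I_d -> int,
        L_omega omega (eta_fun ((4 * kappa)^-1)) x >=
          - (if lat_norm R x < C0 * ((4 * kappa)^-1) ^+ 2 then 1 else 0).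
Proof.
move=> d0 k0 kd.
set T := (4 * kappa)^-1.
have T0 : 0 < T by rewrite /T invr_gt0; lra.
have dge1 : 1 <= d%:R :> R by rewrite ler1n.
have k2 : kappa <= 2^-1.
  apply: le_trans kd _; rewrite lef_pV2 ?posrE; lra.
have T1 : 1/2 <= T.
  rewrite /T -[X in X <= _]invrK lef_pV2 ?posrE; lra.
have kT : kappa = (4 * T)^-1 by rewrite /T invfM invrK mulrA mulVf ?mul1r // pnatr_eq0.
exists 200; split; first lra.
move=> omega opos obound x.
set S := \sum_(j < d) omega x j.
have S0 : 0 < S.
  rewrite /S (bigD1 (Ordinal d0)) //=.
  apply: lt_le_trans (opos x (Ordinal d0)) _; rewrite lerDl.
  by apply: sumr_ge0 => j _; apply: ltW.
set q := fun i => ((x i)%:~R : R).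
set Q := \sum_(j < d) q j ^+ 2.
have Q0 : 0 <= Q by apply: sumr_ge0 => j _; exact: sqr_ge0.
set s := 1 + Q.
set w := fun i => omega x i / (2 * S).
have LE : L_omega omega (eta_fun T) x = \sum_(i < d) w i *
   ((s + 1 + 2 * q i) `^ (- T) + (s + 1 - 2 * q i) `^ (- T) - 2 * s `^ (- T)).
  rewrite /L_omega; apply: eq_bigr => i _; rewrite /eta_fun !sum_shift.
  rewrite /w; congr (_ * (_ `^ _ + _ `^ _ - 2 * _ `^ _)).
  - by rewrite /s /Q /q /lat_to_real /=; ring.
  - by rewrite /s /Q /q /lat_to_real /= mulrN1z; ring.
have sw : \sum_(i < d) w i = 2^-1.
  by rewrite /w -mulr_suml -/S; field; rewrite gt_eqF.
have w0 : forall i, 0 <= w i.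
  by move=> i; rewrite /w divr_ge0 ?mulr_ge0 ?ltW.

move: LE => ->.
have s1 : 1 <= s by rewrite /s; lra.
have s0 : 0 < s by lra.
case: ifPn => hr.
  have hs : s `^ (- T) <= 1.
    rewrite powR_exp // expR_le1 mulNr oppr_le0; apply: mulr_ge0; first lra.
    exact: ln_ge0.
  apply: (@le_trans _ _ (\sum_(i < d) w i * (-2))).
    by rewrite -mulr_suml sw; lra.
  apply: ler_sum => i _; apply: ler_wpM2l; first exact: w0.
  have := powR_ge0 (s + 1 + 2 * q i) (- T); have := powR_ge0 (s + 1 - 2 * q i) (- T).
  lra.
rewrite -leNgt in hr.
have rE : lat_norm R x = Num.sqrt Q by [].
set r := lat_norm R x in hr rE.
have r0 : 0 <= r by rewrite rE sqrtr_ge0.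
have r2 : r ^+ 2 = Q by rewrite rE sqr_sqrtr.
have Tr : 100 * T <= r.
  apply: le_trans hr.
  have h : 0 <= T * (2 * T - 1) by apply: mulr_ge0; lra.
  rewrite expr2; lra.
have qQ : forall i, q i ^+ 2 <= Q.
  move=> i; rewrite /Q (bigD1 i) //= lerDl.
  by apply: sumr_ge0 => j _; exact: sqr_ge0.
have qr : forall i, `|q i| <= r.
  by move=> i; rewrite rE -sqrtr_sqr ler_sqrt.
set Emin := 1 - T * (2 * s + 1) / (2 * s ^+ 2).
have rs : r <= s.
  rewrite /s -r2; have := sqr_ge0 (r - 1); rewrite !expr2; lra.
have Emin0 : 0 <= Emin.
  have s2 : 0 < 2 * s ^+ 2 by apply: mulr_gt0; [lra | apply: exprn_gt0].
  rewrite /Emin subr_ge0 ler_pdivrMr // mul1r.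
  have Ts : T <= s / 100 by lra.
  have T0' : 0 <= T by lra.
  have a0 : 0 <= 2 * s + 1 by lra.
  have a1 : 2 * s + 1 <= 3 * s by lra.
  have := ler_pM T0' a0 Ts a1.
  have -> : s / 100 * (3 * s) = 3 / 100 * s ^+ 2 by rewrite expr2; ring.
  have := sqr_ge0 s; lra.
set P := s `^ (- T).
set Dd := s + 1 + 2 * r.
have hD : forall i, P * (- T * (2 * s + 1 - 4 * q i ^+ 2) / s ^+ 2 +
     Emin * (4 * T ^+ 2 * q i ^+ 2 / Dd ^+ 2)) <=
     (s + 1 + 2 * q i) `^ (- T) + (s + 1 - 2 * q i) `^ (- T) - 2 * s `^ (- T).
  move=> i.
  have hq := qQ i; have hq1 := sqr_ge0 (q i + 1); have hq2 := sqr_ge0 (q i - 1).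
  apply: dir_bound => //; rewrite /s; lra.
apply: (@le_trans _ _ (\sum_(i < d) w i * (P * (- T * (2 * s + 1 - 4 * q i ^+ 2) / s ^+ 2 +
     Emin * (4 * T ^+ 2 * q i ^+ 2 / Dd ^+ 2))))); last first.
  by apply: ler_sum => i _; apply: ler_wpM2l; [exact: w0 | exact: hD].
set c1 := - T * (2 * s + 1) / s ^+ 2.
set c2 := 4 * T / s ^+ 2 + Emin * (4 * T ^+ 2 / Dd ^+ 2).
set W := \sum_(i < d) w i * q i ^+ 2.
have eS : \sum_(i < d) w i * (P * (- T * (2 * s + 1 - 4 * q i ^+ 2) / s ^+ 2 +
     Emin * (4 * T ^+ 2 * q i ^+ 2 / Dd ^+ 2))) = P * (c1 * \sum_(i < d) w i + c2 * W).
  rewrite /W [in RHS]mulrDr [c1 * _]mulr_sumr [c2 * _]mulr_sumr !mulr_sumr -big_split /=.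
  apply: eq_bigr => i _; rewrite /c1 /c2; ring.
rewrite eS sw oppr0.
have wk : forall i, kappa <= w i.
  move=> i; have := obound x i; rewrite -/S.
  have -> : w i = omega x i / S / 2 by rewrite /w; field; rewrite gt_eqF.
  lra.
have hW : kappa * Q <= W.
  rewrite /Q /W mulr_sumr; apply: ler_sum => i _; apply: ler_wpM2r; [exact: sqr_ge0 | exact: wk].
have s20 : 0 < s ^+ 2 by apply: exprn_gt0.
have Dd0 : 0 < Dd by rewrite /Dd; lra.
have Dd20 : 0 < Dd ^+ 2 by apply: exprn_gt0.
have c20 : 0 <= c2.
  rewrite /c2; apply: addr_ge0.
    by apply: divr_ge0; [lra | exact: ltW].
  apply: mulr_ge0 => //; apply: divr_ge0; last exact: ltW.
  by apply: mulr_ge0; [lra | exact: sqr_ge0].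
apply: mulr_ge0; first exact: powR_ge0.
apply: (@le_trans _ _ (c1 * 2^-1 + c2 * (kappa * Q))); last first.
  by rewrite lerD2l; apply: ler_wpM2l.
have eG : c1 * 2^-1 + c2 * (kappa * Q) =
  (2 * Q * Dd ^+ 2 + T * Q * (2 * s ^+ 2 - T * (2 * s + 1)) - T * (2 * s + 1) * Dd ^+ 2)
     / (2 * s ^+ 2 * Dd ^+ 2).
  rewrite kT /c1 /c2 /Emin; field.
  by rewrite (gt_eqF Dd0) (gt_eqF s0) (gt_eqF T0).
rewrite eG; apply: divr_ge0.
  have G := @final_poly R T r T1 Tr.
  rewrite r2 -/s -/Dd in G.
  exact: G.
apply: mulr_ge0; [apply: mulr_ge0; [lra | exact: ltW] | exact: ltW].
Qed.
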